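(* For all positive integers $k,n$, we have $T_L(n)\ge 3^k$ if and only if $b'_3(k,2)\le n$.
   Context: $T_L(n)$ is the maximum size of a linear trifferent code of length $n$, i.e. a linear subspace $C\subseteq\mathbb{F}_3^n$ such that for any three distinct $x,y,z\in C$ there is a coordinate $i$ with $\{x_i,y_i,z_i\}=\mathbb{F}_3$. A $2$-blocking set in $\mathbb{F}_q^k$ is a set of points meeting every affine subspace (translate of a vector subspace) of dimension $k-2$. $b'_q(k,2)$ is the minimum size of a set $B\subseteq\mathbb{F}_q^k$ such that $\bigcup_{\zeta\in\mathbb{F}_q}\zeta B$ is a $2$-blocking set in $\mathbb{F}_q^k$; for $q=3$ this is the minimum $|B|$ such that $\{\vec0\}\cup B\cup -B$ is a $2$-blocking set. *)

(* Defs.v *)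
From HB Require Import structures.
From mathcomp Require Import all_boot all_order all_algebra.
Set Implicit Arguments. Unset Strict Implicit. Unset Printing Implicit Defensive.
Import GRing.Theory.
Local Open Scope ring_scope.

(* Vectors of F_3^n are row vectors 'rV['F_3]_n; coordinate i of x is x 0 i. *)
Notation F3 := ('F_3 : finFieldType).
Notation F3vec n := ('rV['F_3]_n).

Definition is_linear_code n (C : {set F3vec n}) : bool :=
  (0 \in C) &&
  [forall a : 'F_3, forall x in C, forall y in C, a *: x + y \in C].

Definition is_trifferent n (C : {set F3vec n}) : bool :=
  [forall x in C, forall y in C, forall z in C,
     [&& x != y, y != z & x != z] ==>
     [exists i : 'I_n, [set x 0 i; y 0 i; z 0 i] == [set: 'F_3]]].

Definition T_L (n : nat) : nat :=
  \max_(C : {set F3vec n} | is_linear_code C && is_trifferent C) #|C|.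

(* S is a 2-blocking set in F_3^k: it meets every affine subspace a + U
   with U a vector subspace of dimension k-2 (i.e. \dim U + 2 = k). *)
Definition is_2_blocking k (S : {set F3vec k}) : bool :=
  [forall a : F3vec k,
     [forall U : {set F3vec k}, (is_linear_code U &&
        (\dim (span (enum U)) + 2 == k)%N) ==>
        [exists b in S, b - a \in U]]].

(* b'_3(k,2): minimum |B| such that {0} ∪ B ∪ -B is 2-blocking.
   The default value #|F_3^k| is an upper bound for every |B|, so it does
   not affect the minimum. *)
Definition b'3_2 (k : nat) : nat :=
  \big[minn/#|[set: F3vec k]|]_(B : {set F3vec k} |
      is_2_blocking (0 |: (B :|: [set - b | b in B]))) #|B|.

(* Main.v *)
Require Import Defs.
From mathcomp Require Import all_boot all_order all_algebra.
Set Implicit Arguments. Unset Strict Implicit. Unset Printing Implicit Defensive.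
Import GRing.Theory.
Local Open Scope ring_scope.

Lemma F3cases (x : 'F_3) : [\/ x = 0, x = 1 | x = -1].
Proof.
case: x => [[|[|[|m]]] Hm].
- by constructor 1; apply: val_inj.
- by constructor 2; apply: val_inj.
- by constructor 3; apply: val_inj.
- by [].
Qed.

Lemma f3a (a b p q : 'F_3) : (a != 0) || (b != 0) -> a * p + b * q = 0 ->
  b * p - a * q = 0 -> p = 0 /\ q = 0.
Proof.
by case: (F3cases a) => ->; case: (F3cases b) => ->; case: (F3cases p) => ->;
  case: (F3cases q) => ->.
Qed.

Lemma f3sq (a b : 'F_3) : (a != 0) || (b != 0) -> a * a + b * b != 0.
Proof. by case: (F3cases a) => ->; case: (F3cases b) => ->. Qed.

Lemma f3sign (s t : 'F_3) : s != 0 -> t != 0 -> s = t \/ s = - t.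
Proof.
case: (F3cases s) => ->; case: (F3cases t) => -> // _ _;
  first [by left | by right; apply: val_inj].
Qed.

Lemma f3b (s t : 'F_3) : t != 0 -> [set s; s + t; s - t] == [set: 'F_3].
Proof.
move=> t0; apply/eqP/setP => x; rewrite !inE.
by case: (F3cases s) t0 => ->; case: (F3cases t) => -> //; case: (F3cases x) => ->.
Qed.

Lemma f3c (p q : 'F_3) : [set 0; p; q] == [set: 'F_3] -> p != 0 /\ p + q = 0.
Proof.
move/eqP/setP => H.
have Hx (x : 'F_3) : (x == 0) || (x == p) || (x == q).
  by have := H x; rewrite !inE.
move: (Hx 1) (Hx (-1)).
case: (F3cases p) => ->; case: (F3cases q) => ->; try done.
all: by move=> _ _; split; rewrite ?subrr ?addNr.
Qed.

Lemma f3k1 (u w : 'F_3) : u != 0 -> w != u -> w != - u -> w = 0.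
Proof. by case: (F3cases u) => ->; case: (F3cases w) => ->. Qed.

Lemma f3scal (c : 'F_3) k (u : 'rV['F_3]_k) : [\/ c *: u = 0, c *: u = u | c *: u = - u].
Proof.
case: (F3cases c) => ->; [constructor 1; exact: scale0r | constructor 2; exact: scale1r
  | constructor 3; exact: scaleN1r].
Qed.

Lemma f3two k (u : 'rV['F_3]_k) : u + u = - u.
Proof.
have -> : u + u = (1 + 1) *: u by rewrite scalerDl scale1r.
have -> : (1 + 1 : 'F_3) = -1 by apply: val_inj.
exact: scaleN1r.
Qed.


Definition dotv k (p x : 'rV['F_3]_k) : 'F_3 := \sum_j p 0 j * x 0 j.

Section Dot.
Variable k : nat.
Implicit Types p q x y : 'rV['F_3]_k.
Lemma dotvDl p q x : dotv (p + q) x = dotv p x + dotv q x.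
Proof. by rewrite /dotv -big_split; apply: eq_bigr => j _; rewrite mxE mulrDl. Qed.
Lemma dotvZl a p x : dotv (a *: p) x = a * dotv p x.
Proof. by rewrite /dotv mulr_sumr; apply: eq_bigr => j _; rewrite mxE mulrA. Qed.
Lemma dotvNl p x : dotv (- p) x = - dotv p x.
Proof. by rewrite /dotv -sumrN; apply: eq_bigr => j _; rewrite mxE mulNr. Qed.
Lemma dotvBl p q x : dotv (p - q) x = dotv p x - dotv q x.
Proof. by rewrite dotvDl dotvNl. Qed.
Lemma dotv0l x : dotv 0 x = 0.
Proof. by rewrite /dotv big1 // => j _; rewrite mxE mul0r. Qed.
Lemma dotvDr p x y : dotv p (x + y) = dotv p x + dotv p y.
Proof. by rewrite /dotv -big_split; apply: eq_bigr => j _; rewrite mxE mulrDr. Qed.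
Lemma dotvZr a p x : dotv p (a *: x) = a * dotv p x.
Proof. by rewrite /dotv mulr_sumr; apply: eq_bigr => j _; rewrite mxE mulrCA. Qed.
Lemma dotvNr p x : dotv p (- x) = - dotv p x.
Proof. by rewrite /dotv -sumrN; apply: eq_bigr => j _; rewrite mxE mulrN. Qed.
Lemma dotvBr p x y : dotv p (x - y) = dotv p x - dotv p y.
Proof. by rewrite dotvDr dotvNr. Qed.
Lemma dotv0r p : dotv p 0 = 0.
Proof. by rewrite /dotv big1 // => j _; rewrite mxE mulr0. Qed.
End Dot.

Section Lin.
Variable n : nat.
Variable U : {set 'rV['F_3]_n}.
Hypothesis HU : is_linear_code U.

Lemma linP : 0 \in U /\ (forall a x y, x \in U -> y \in U -> a *: x + y \in U).
Proof.
case/andP: HU => H0 /forallP H; split=> // a x y xU yU.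
by move: (H a) => /forall_inP /(_ x xU) /forall_inP /(_ y yU).
Qed.
Lemma lin0 : 0 \in U. Proof. by case: linP. Qed.
Lemma linD x y : x \in U -> y \in U -> x + y \in U.
Proof. by move=> xU yU; have [_ H] := linP; have := H 1 x y xU yU; rewrite scale1r. Qed.
Lemma linZ a x : x \in U -> a *: x \in U.
Proof. by move=> xU; have [H0 H] := linP; have := H a x 0 xU H0; rewrite addr0. Qed.
Lemma linN x : x \in U -> - x \in U.
Proof. by move=> xU; rewrite -scaleN1r linZ. Qed.
Lemma lin_sum (I : Type) (r : seq I) (P : pred I) (F : I -> 'rV['F_3]_n) :
  (forall i, P i -> F i \in U) -> \sum_(i <- r | P i) F i \in U.
Proof. by move=> HF; apply: (big_ind (fun v => v \in U)) => //; [exact: lin0 | exact: linD]. Qed.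
Lemma lin_span x : x \in span (enum U) -> x \in U.
Proof.
move/(@coord_span _ _ _ (in_tuple (enum U))) => ->.
apply: lin_sum => i _; apply: linZ.
by rewrite -mem_enum; apply: mem_nth; exact: ltn_ord.
Qed.
End Lin.

Lemma bigmin_le (T : finType) (P : pred T) (F : T -> nat) d i :
  P i -> (\big[minn/d]_(j | P j) F j <= F i)%N.
Proof.
move=> Pi; have : i \in index_enum T by rewrite mem_index_enum.
elim: (index_enum T) => // j s IH; rewrite inE big_cons => /orP [/eqP <-|/IH h].
  by rewrite Pi geq_minl.
by case: (P j) => //; exact: leq_trans (geq_minr _ _) h.
Qed.

Lemma bigmin_cases (T : finType) (P : pred T) (F : T -> nat) d :
  \big[minn/d]_(j | P j) F j = d \/ exists2 i, P i & \big[minn/d]_(j | P j) F j = F i.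
Proof.
elim/big_ind: _ => [|x y Hx Hy|i Pi]; [by left| |by right; exists i].
by rewrite /minn; case: ifP.
Qed.

Lemma bigmax_cases (T : finType) (P : pred T) (F : T -> nat) :
  \max_(j | P j) F j = 0%N \/ exists2 i, P i & \max_(j | P j) F j = F i.
Proof.
elim/big_ind: _ => [|x y Hx Hy|i Pi]; [by left| |by right; exists i].
by rewrite /maxn; case: ifP.
Qed.


Lemma dim_rV k : \dim {: 'rV['F_3]_k} = k.
Proof. rewrite dimvf dim_matrix; exact: mul1n. Qed.

Lemma nat_aux (a b : nat) : (a + 2 = b)%N -> (b - a = 2)%N.
Proof. by move=> <-; rewrite addKn. Qed.

Lemma dualA k (U : {set 'rV['F_3]_k}) : is_linear_code U ->
  (\dim (span (enum U)) + 2 = k)%N ->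
  exists f1 f2 : 'rV['F_3]_k, forall x, dotv f1 x = 0 -> dotv f2 x = 0 -> x \in U.
Proof.
move=> HU Hd.
set W := span (enum U).
have dC : \dim (W^C)%VS = 2%N by rewrite dimv_compl dim_rV; apply: nat_aux.
set e := vbasis (W^C)%VS.
pose phi (i : 'I_(\dim (W^C)%VS)) (x : 'rV['F_3]_k) := coord e i (x - projv W x).
have phiE i x : phi i x = dotv (\row_j phi i (delta_mx 0 j)) x.
  rewrite /dotv /phi {1 2}[x]row_sum_delta linear_sum -sumrB linear_sum.
  apply: eq_bigr => j _; rewrite mxE linearZ -scalerBr linearZ /= mulrC.
  by [].
have i0 : (0 < \dim (W^C)%VS)%N by rewrite dC.
have i1 : (1 < \dim (W^C)%VS)%N by rewrite dC.
exists (\row_j phi (Ordinal i0) (delta_mx 0 j)), (\row_j phi (Ordinal i1) (delta_mx 0 j)).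
move=> x; rewrite -!phiE => h0 h1.
apply: (lin_span HU).
have Hc : x - projv W x \in (W^C)%VS by apply: memv_projC.
have : x - projv W x = 0.
  rewrite (coord_vbasis Hc) big1 // => i _.
  have [->|->] : i = Ordinal i0 \/ i = Ordinal i1.
    case: i => [[|[|m]] Hm]; [left|right|]; try by apply: val_inj.
    by exfalso; have := Hm; rewrite dC.
  - by move: h0; rewrite /phi => ->; rewrite scale0r.
  - by move: h1; rewrite /phi => ->; rewrite scale0r.
move/eqP; rewrite subr_eq0 => /eqP ->; exact: memv_proj.
Qed.

Definition Kprop k n (g : 'I_n -> 'rV['F_3]_k) :=
  forall u w : 'rV['F_3]_k, u != 0 -> w != u -> w != - u ->
  exists i, dotv w (g i) = 0 /\ dotv u (g i) != 0.

Lemma blocking_of_K k n (g : 'I_n -> 'rV['F_3]_k) : Kprop g ->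
  is_2_blocking (0 |: ([set g i | i : 'I_n] :|: [set - b | b in [set g i | i : 'I_n]])).
Proof.
move=> HK; apply/forallP => a; apply/forallP => U; apply/implyP => /andP [HU /eqP Hd].
set S := 0 |: _.
have [aU|aU] := boolP (a \in U).
  apply/existsP; exists 0; rewrite !inE eqxx /= sub0r; exact: linN.
have [f1 [f2 Hf]] := dualA HU Hd.
set al := dotv f1 a; set be := dotv f2 a.
have albe : (al != 0) || (be != 0).
  apply: contraR aU; rewrite negb_or !negbK => /andP [/eqP h1 /eqP h2]; exact: Hf.
pose u := al *: f1 + be *: f2; pose w := be *: f1 - al *: f2.
have ua : dotv u a = al * al + be * be by rewrite dotvDl !dotvZl.
have wa : dotv w a = 0 by rewrite dotvBl !dotvZl mulrC subrr.
have ua0 : dotv u a != 0 by rewrite ua; apply: f3sq.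
have u0 : u != 0 by apply: contraNneq ua0 => ->; rewrite dotv0l.
have wu : w != u by apply: contraNneq ua0 => <-; rewrite wa.
have wNu : w != - u.
  by apply: contraNneq ua0 => h; rewrite -[u]opprK -h dotvNl wa oppr0.
have key b : b \in S -> dotv w b = 0 -> dotv u b = dotv u a ->
    [exists b in S, b - a \in U].
  move=> bS wb ub; apply/existsP; exists b; rewrite bS /=.
  have wx : dotv w (b - a) = 0 by rewrite dotvBr wb wa subrr.
  have ux : dotv u (b - a) = 0 by rewrite dotvBr ub subrr.
  move: wx ux; rewrite /u /w dotvBl dotvDl !dotvZl => wx ux.
  have [p0 q0] := f3a albe ux wx.
  exact: Hf.
have [i [wi ui]] := HK u w u0 wu wNu.
have giS : g i \in [set g i | i : 'I_n] by apply: imset_f.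
case: (f3sign ui ua0) => hs.
  by apply: (key (g i)) => //; rewrite !inE giS orbT.
apply: (key (- g i)); last by rewrite dotvNr hs opprK.
  by rewrite !inE; apply/orP; right; apply/orP; right; apply: imset_f.
by rewrite dotvNr wi oppr0.
Qed.


Lemma mulG_entry k n (G : 'M['F_3]_(k, n)) (p : 'rV['F_3]_k) i :
  (p *m G) 0 i = dotv p (\row_j G j i).
Proof. by rewrite mxE /dotv; apply: eq_bigr => j _; rewrite mxE. Qed.

Lemma K_of_code k n (G : 'M['F_3]_(k, n)) (C : {set 'rV['F_3]_n}) :
  (forall p : 'rV_k, p *m G \in C) -> (forall p : 'rV_k, p *m G = 0 -> p = 0) -> is_trifferent C ->
  Kprop (fun i => \row_j G j i).
Proof.
move=> GC Ginj Htri u w u0 wu wNu.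
pose v := w - u.
have yC := GC u; have zC := GC v; have xC := GC 0.
rewrite mul0mx in xC.
have xy : 0 != u *m G by apply: contra u0 => /eqP/esym/Ginj ->.
have xz : 0 != v *m G.
  by apply: contra wu => /eqP/esym/Ginj/eqP; rewrite subr_eq0.
have yz : u *m G != v *m G.
  apply: contra wNu => /eqP h; apply/eqP.
  have : (u - v) *m G = 0 by rewrite mulmxBl h subrr.
  move/Ginj/eqP; rewrite subr_eq0 /v => /eqP h2.
  by rewrite -(subrK u w) -h2 f3two.
move: Htri => /forall_inP /(_ _ xC) /forall_inP /(_ _ yC) /forall_inP /(_ _ zC).
rewrite xy yz xz /= => /existsP [i].
rewrite mxE => /f3c [h1 h2].
exists i; split; last by rewrite -mulG_entry.
have -> : w = u + v by rewrite /v addrC subrK.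
by rewrite dotvDl -!mulG_entry.
Qed.

Lemma card_F3 : #|'F_3| = 3%N.
Proof. by rewrite card_Fp. Qed.

Lemma card_rV k : #|{: 'rV['F_3]_k}| = (3 ^ k)%N.
Proof. by rewrite card_mx card_F3 mul1n. Qed.

Lemma G_of_code k n (C : {set 'rV['F_3]_n}) : is_linear_code C -> (3 ^ k <= #|C|)%N ->
  exists G : 'M['F_3]_(k, n),
    (forall p : 'rV_k, p *m G \in C) /\ (forall p : 'rV_k, p *m G = 0 -> p = 0).
Proof.
move=> HC Hk.
pose M := \matrix_(i < #|C|) nth 0 (enum C) i.
have subC x : (x <= M)%MS -> x \in C.
  case/submxP => D ->; rewrite mulmx_sum_row; apply: (lin_sum HC) => i _.
  apply: (linZ HC); rewrite rowK -mem_enum; apply: mem_nth.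
  by rewrite -cardE ltn_ord.
have Csub x : x \in C -> (x <= M)%MS.
  move=> xC; have hi : (index x (enum C) < #|C|)%N by rewrite cardE index_mem mem_enum.
  have -> : x = row (Ordinal hi) M by rewrite rowK nth_index ?mem_enum.
  exact: row_sub.
set r := \rank M.
have kr : (k <= r)%N.
  have : (#|C| <= 3 ^ r)%N.
    have : C \subset [set p *m row_base M | p : 'rV_r].
      apply/subsetP => x /Csub; rewrite -(eq_row_base M) => /submxP [p ->].
      exact: imset_f.
    move/subset_leq_card/leq_trans; apply.
    by apply: leq_trans (leq_imset_card _ _) _; rewrite card_mx card_F3 mul1n.
  by move=> h; rewrite -(@leq_exp2l 3) //; exact: leq_trans Hk h.
pose E : 'M['F_3]_(k, r) := \matrix_(i, j) (i == j :> nat)%:R.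
exists (E *m row_base M); split.
  move=> p; apply: subC; rewrite mulmxA; apply: (submx_trans (submxMl _ _)).
  by rewrite eq_row_base.
move=> p; rewrite mulmxA -(mul0mx _ (row_base M)) => /(row_free_inj (row_base_free M)) h.
apply/rowP => i; have := congr1 (fun v : 'rV['F_3]_r => v 0 (widen_ord kr i)) h.
rewrite !mxE (bigD1 i) //= big1 => [|j ji].
  by rewrite !mxE eqxx mulr1 addr0.
by rewrite !mxE /= (inj_eq val_inj) (negbTE ji) mulr0.
Qed.

Lemma dir1 k n : (3 ^ k <= T_L n)%N -> (b'3_2 k <= n)%N.
Proof.
move=> H; rewrite /T_L in H.
case: (bigmax_cases (fun C : {set 'rV['F_3]_n} => is_linear_code C && is_trifferent C)
   (fun C => #|C|)) => [h|[C /andP [HC Ht] h]].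
  by move: H; rewrite h leqn0 expn_eq0.
rewrite h in H.
have [G [GC Ginj]] := G_of_code HC H.
have HK := K_of_code GC Ginj Ht.
have Hb := blocking_of_K HK.
rewrite /b'3_2.
apply: leq_trans (@bigmin_le _
  (fun B : {set 'rV['F_3]_k} => is_2_blocking (0 |: (B :|: [set - b | b in B])))
  (fun B => #|B|) _ _ Hb) _.
by rewrite (leq_trans (leq_imset_card _ _)) // card_ord.
Qed.


Lemma code_of_K k n (g : 'I_n -> 'rV['F_3]_k) : Kprop g -> (3 ^ k <= T_L n)%N.
Proof.
move=> HK.
pose cw (p : 'rV['F_3]_k) : 'rV['F_3]_n := \row_i dotv p (g i).
have cwB p q : cw (p - q) = cw p - cw q by apply/rowP => i; rewrite !mxE dotvBl.
have cwinj : injective cw.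
  move=> p q hpq; apply/eqP; rewrite -subr_eq0; apply/negPn/negP => u0.
  have w1 : 0 != p - q by rewrite eq_sym.
  have w2 : 0 != - (p - q) by rewrite eq_sym oppr_eq0.
  have [i [_ hi]] := HK _ _ u0 w1 w2.
  move: hi; rewrite dotvBl.
  have := congr1 (fun v : 'rV['F_3]_n => v 0 i) hpq; rewrite /cw !mxE => ->.
  by rewrite subrr eqxx.
pose C := [set cw p | p : 'rV['F_3]_k].
have HC : is_linear_code C.
  apply/andP; split.
    apply/imsetP; exists 0 => //; apply/rowP => i; rewrite !mxE dotv0l //.
  apply/forallP => a; apply/forall_inP => x /imsetP [p _ ->].
  apply/forall_inP => y /imsetP [q _ ->].
  apply/imsetP; exists (a *: p + q) => //; apply/rowP => i.
  by rewrite !mxE dotvDl dotvZl.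
have Ht : is_trifferent C.
  apply/forall_inP => x /imsetP [p _ ->]; apply/forall_inP => y /imsetP [q _ ->].
  apply/forall_inP => z /imsetP [r _ ->]; apply/implyP => /and3P [xy yz xz].
  have u0 : q - p != 0 by rewrite subr_eq0; apply: contraNneq xy => ->.
  set u := q - p; set v := r - p.
  have wu : u + v != u.
    by rewrite -subr_eq0 addrC addKr subr_eq0; apply: contraNneq xz => ->.
  have wNu : u + v != - u.
    apply: contraNneq yz => h.
    have : v = u by apply: (addrI u); rewrite h -f3two.
    by rewrite /u /v => /(canRL (subrK p)); rewrite subrK => ->.
  have [i [wi ui]] := HK _ _ u0 wu wNu.
  apply/existsP; exists i; rewrite !mxE.
  have -> : dotv q (g i) = dotv p (g i) + dotv u (g i).
    by rewrite /u dotvBl addrC subrK.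
  have -> : dotv r (g i) = dotv p (g i) - dotv u (g i).
    move: wi; rewrite dotvDl => /eqP; rewrite addr_eq0 => /eqP hv.
    by rewrite hv opprK /v dotvBl addrC subrK.
  exact: f3b.
apply: leq_trans (@leq_bigmax_cond _
  (fun C : {set 'rV['F_3]_n} => is_linear_code C && is_trifferent C) (fun C => #|C|) C _).
  by rewrite /C card_imset // card_rV.
by rewrite HC Ht.
Qed.


Lemma ord2_cases (c : 'I_2) : c = 0 \/ c = 1.
Proof. by case: c => [[|[|m]] Hm]; [left|right|]; try apply: val_inj. Qed.

Lemma dualB k (u w : 'rV['F_3]_k) : u != 0 -> w != 0 -> w != u -> w != - u ->
  [/\ is_linear_code [set x : 'rV['F_3]_k | (dotv u x == 0%R) && (dotv w x == 0%R)],
      (\dim (span (enum [set x : 'rV['F_3]_k | (dotv u x == 0%R) && (dotv w x == 0%R)])) + 2 = k)%N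
    & exists a, dotv u a = 1 /\ dotv w a = 0].
Proof.
move=> u0 w0 wu wNu.
set U := [set x : 'rV['F_3]_k | _].
pose Ht : 'M['F_3]_(2, k) := \matrix_(c, j) (if c == 0 then u 0 j else w 0 j).
have entry x c : (x *m Ht^T) 0 c = if c == 0 then dotv u x else dotv w x.
  rewrite mxE /dotv; case: eqP => hc; apply: eq_bigr => j _; rewrite !mxE.
    by rewrite hc eqxx mulrC.
  by rewrite (introF eqP hc) mulrC.
have rowfree : row_free Ht.
  apply: inj_row_free => v hv.
  have r0 : row 0 Ht = u by apply/rowP => j; rewrite !mxE eqxx.
  have r1 : row 1 Ht = w by apply/rowP => j; rewrite !mxE.
  have hv' : v 0 0 *: u + v 0 1 *: w = 0.
    have e0 : (0 : 'I_2) = ord0 by apply: val_inj.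
    have e1 : (1 : 'I_2) = lift ord0 ord0 by apply: val_inj.
    by rewrite -hv mulmx_sum_row big_ord_recl big_ord1 -r0 -r1 e0 e1.
  have v1 : v 0 1 = 0.
    apply/eqP; apply: contraT => v10.
    have hw : w = (- ((v 0 1)^-1 * v 0 0)) *: u.
      apply: (scalerI v10); rewrite scalerA mulrN mulrA divff // mul1r scaleNr.
      by apply/eqP; rewrite -addr_eq0 addrC hv'.
    by case: (f3scal (- ((v 0 1)^-1 * v 0 0)) u) => h; move: hw; rewrite h => /eqP;
      rewrite ?(negbTE w0) ?(negbTE wu) ?(negbTE wNu).
  have v0 : v 0 0 = 0.
    by move: hv'; rewrite v1 scale0r addr0 => /eqP; rewrite scaler_eq0 (negbTE u0) orbF => /eqP.
  by apply/rowP => j; rewrite mxE; case: (ord2_cases j) => ->.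
case/row_freeP: rowfree => Bm HB.
have surj (y : 'rV['F_3]_2) : exists x : 'rV['F_3]_k, x *m Ht^T = y.
  exists (y *m Bm^T); by rewrite -mulmxA -trmx_mul HB trmx1 mulmx1.
have HU : is_linear_code U.
  apply/andP; split; first by rewrite inE !dotv0r eqxx.
  apply/forallP => a; apply/forall_inP => x; rewrite inE => /andP [/eqP ux /eqP wx].
  apply/forall_inP => y; rewrite inE => /andP [/eqP uy /eqP wy].
  by rewrite inE !dotvDr !dotvZr ux wx uy wy mulr0 addr0 eqxx.
split => //; last first.
  have [x hx] := surj (delta_mx 0 0); exists x; split.
    by have := entry x 0; rewrite hx eqxx mxE.
  by have := entry x 1; rewrite hx mxE.
pose h : 'Hom('rV['F_3]_k, 'rV['F_3]_2) := linfun (mulmxr Ht^T).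
have hE x : h x = x *m Ht^T by rewrite lfunE.
have img : limg h = fullv.
  apply/eqP; rewrite eqEsubv subvf /=; apply/subvP => y _.
  have [x hx] := surj y; rewrite -hx -hE; apply: memv_img; exact: memvf.
have ker : span (enum U) = lker h.
  apply/vspaceP => x; rewrite memv_ker hE; apply/idP/idP.
    move/(lin_span HU); rewrite inE => /andP [/eqP ux /eqP wx].
    by apply/eqP/rowP => c; rewrite entry mxE; case: ifP.
  move/eqP => hx; apply: memv_span; rewrite mem_enum inE.
  have := entry x 0; have := entry x 1; rewrite hx !mxE /= => <- <-.
  by rewrite eqxx.
rewrite ker; have := limg_ker_dim h fullv; rewrite capfv img !dim_rV; exact.
Qed.


Lemma dotv_delta k (u : 'rV['F_3]_k) j : dotv u (delta_mx 0 j) = u 0 j.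
Proof.
rewrite /dotv (bigD1 j) //= big1 => [|i ij]; first by rewrite !mxE !eqxx mulr1 addr0.
by rewrite !mxE eqxx (negbTE ij) mulr0.
Qed.

Lemma K1_of_blocking k (B : {set 'rV['F_3]_k}) :
  is_2_blocking (0 |: (B :|: [set - b | b in B])) ->
  forall u w : 'rV['F_3]_k, u != 0 -> w != 0 -> w != u -> w != - u ->
  exists2 b, b \in B & dotv w b = 0 /\ dotv u b != 0.
Proof.
move=> Hbl u w u0 w0 wu wNu.
have [HU Hd [a [ua wa]]] := dualB u0 w0 wu wNu.
move: Hbl => /forallP /(_ a) /forallP
  /(_ [set x : 'rV['F_3]_k | (dotv u x == 0%R) && (dotv w x == 0%R)]) /implyP.
rewrite HU Hd eqxx => /(_ isT) /existsP [b /andP [bS]].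
rewrite inE !dotvBr ua wa subr0 subr_eq0 => /andP [/eqP ub /eqP wb].
move: bS; rewrite !inE => /orP [/eqP b0 | /orP [bB | /imsetP [b' b'B bb']]].
- by move: ub; rewrite b0 dotv0r => /eqP; rewrite eq_sym oner_eq0.
- by exists b => //; rewrite ub oner_eq0.
- exists b' => //; move: ub wb; rewrite bb' !dotvNr => ub /eqP; rewrite oppr_eq0 => /eqP ->.
  by split => //; rewrite -oppr_eq0 ub oner_eq0.
Qed.

Lemma idx_of k n (B : {set 'rV['F_3]_k}) (e0 : 'rV['F_3]_k) b :
  (#|B| <= n)%N -> b \in B -> exists i : 'I_n, nth e0 (enum B) i = b.
Proof.
move=> HB bB.
have hi : (index b (enum B) < n)%N by rewrite (leq_trans _ HB) // cardE index_mem mem_enum.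
by exists (Ordinal hi); rewrite /= nth_index ?mem_enum.
Qed.

Lemma Kprop_of k n (B : {set 'rV['F_3]_k}) (e0 : 'rV['F_3]_k) : (#|B| <= n)%N ->
  (forall u w : 'rV['F_3]_k, u != 0 -> w != 0 -> w != u -> w != - u ->
     exists2 b, b \in B & dotv w b = 0 /\ dotv u b != 0) ->
  (forall u : 'rV['F_3]_k, u != 0 -> exists i : 'I_n, dotv u (nth e0 (enum B) i) != 0) ->
  Kprop (fun i : 'I_n => nth e0 (enum B) i).
Proof.
move=> HB K1 K0 u w u0 wu wNu.
have [w0|w0] := eqVneq w 0.
  by have [i hi] := K0 u u0; exists i; rewrite w0 dotv0l.
have [b bB [wb ub]] := K1 u w u0 w0 wu wNu.
by have [i hi] := idx_of e0 HB bB; exists i; rewrite hi.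
Qed.

Lemma dir2 k n : (0 < k)%N -> (0 < n)%N -> (b'3_2 k <= n)%N -> (3 ^ k <= T_L n)%N.
Proof.
move=> hk hn H.
have [B [Hbl HB]] : exists B : {set 'rV['F_3]_k},
    is_2_blocking (0 |: (B :|: [set - b | b in B])) /\ (#|B| <= n)%N.
  case: (bigmin_cases
    (fun B : {set 'rV['F_3]_k} => is_2_blocking (0 |: (B :|: [set - b | b in B])))
    (fun B => #|B|) #|[set: 'rV['F_3]_k]|) => [h|[B PB h]]; move: H; rewrite /b'3_2 h => H.
    exists [set: 'rV['F_3]_k]; split => //.
    apply/forallP => a; apply/forallP => U; apply/implyP => /andP [HU _].
    apply/existsP; exists a; rewrite !inE orbT /= subrr; exact: lin0 HU.
  by exists B.
pose e0 : 'rV['F_3]_k := delta_mx 0 (Ordinal hk).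
have [k1|k2] : k = 1%N \/ (1 < k)%N by case: k hk {B Hbl HB H e0} => [|[|k']] //; auto.
  subst k.
  apply: (@code_of_K 1 n (fun i : 'I_n => nth e0 (enum (set0 : {set 'rV['F_3]_1})) i)).
  apply: Kprop_of; first by rewrite cards0.
    move=> u w u0 w0 wu wNu; exfalso.
    have ne (x y : 'rV['F_3]_1) : x != y -> x 0 0 != y 0 0.
      by apply: contra => /eqP h; apply/eqP/rowP => j; rewrite (ord1 j).
    move/ne: w0 (ne _ _ wu) (ne _ _ wNu); rewrite !mxE => w0 wu' wNu'.
    by move/negP: w0; apply; apply/eqP; apply: f3k1 wu' wNu'; move/ne: u0; rewrite mxE.
  move=> u u0; exists (Ordinal hn); rewrite enum_set0 nth_nil /e0 dotv_delta.
  by move/rV0Pn: u0 => [j]; rewrite (ord1 j) => h; have -> : Ordinal hk = 0 by apply: val_inj.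
apply: (@code_of_K k n (fun i : 'I_n => nth e0 (enum B) i)).
have K1 := K1_of_blocking Hbl.
apply: Kprop_of => // u u0.
have [j uj] := rV0Pn _ u0.
have [j' jj'] : exists j' : 'I_k, j' != j.
  case: (eqVneq (val j) 0%N) => hj.
    by exists (Ordinal k2); apply/eqP => /(congr1 val); rewrite hj.
  by exists (Ordinal hk); apply/eqP => /(congr1 val) /= h; move/eqP: hj; apply; exact: esym h.
pose w : 'rV['F_3]_k := delta_mx 0 j'.
have wj : w 0 j = 0 by rewrite mxE eqxx /= eq_sym (negbTE jj').
have w0 : w != 0 by apply/rV0Pn; exists j'; rewrite mxE !eqxx oner_eq0.
have wu : w != u by apply: contra uj => /eqP <-; rewrite wj.
have wNu : w != - u.
  by apply: contra uj => /eqP h; rewrite -[u]opprK -h mxE wj oppr0.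
have [b bB [_ ub]] := K1 u w u0 w0 wu wNu.
by have [i hi] := idx_of e0 HB bB; exists i; rewrite hi.
Qed.

Local Close Scope ring_scope.

Theorem corollary6p3 (k n : nat) (hk : (0 < k)%N) (hn : (0 < n)%N) :
  (3 ^ k <= T_L n)%N <-> (b'3_2 k <= n)%N.
Proof. split; [exact: dir1 | exact: dir2]. Qed.
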